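(* The set $S'=\{PQ-QP : P,Q \text{ prime words}\}$ generates the ideal $\mathcal{J}$ (as a two-sided ideal of $\mathcal{A}$).
   Context: $\mathcal{A}$ is the free associative $\mathbb{C}$-algebra on noncommuting generators $L,R$; words are finite products of these letters. A word is balanced if it contains equally many $L$'s and $R$'s. $\mathcal{J}$ is the two-sided ideal generated by $S=\{FG-GF : F,G \text{ nonempty balanced words}\}$. A word is prime if it is nonempty, balanced, and cannot be written as a product of two nonempty balanced words. *)

(* Defs.v *)
From HB Require Import structures.
From mathcomp Require Import all_boot all_order all_algebra.
From mathcomp Require Import Rstruct complex.
From Stdlib Require Import Rdefinitions.
Set Implicit Arguments. Unset Strict Implicit. Unset Printing Implicit Defensive.
Import Order.TTheory GRing.Theory Num.Theory.
Local Open Scope ring_scope.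

Definition C : Type := complex Rdefinitions.R.

Definition letter := bool.
Definition Lt : letter := true.
Definition Rt : letter := false.
Definition word := seq letter.

Definition balanced (w : word) : bool := count (pred1 Lt) w == count (pred1 Rt) w.

Definition prime_word (w : word) : Prop :=
  w != [::] /\ balanced w /\
  ~ (exists u v : word, [/\ u != [::], v != [::], balanced u, balanced v & w = u ++ v]).

(* Elements of the free associative C-algebra A = C<L,R> are represented by
   their coefficient functions word -> C with finite support; the basis
   element of a word w is [mono w]. *)
Definition series := word -> C.

Definition is_poly (f : series) : Prop :=
  exists s : seq word, forall w, f w != 0 -> w \in s.

Definition szero : series := fun _ => 0.
Definition sadd (f g : series) : series := fun w => f w + g w.
Definition ssub (f g : series) : series := fun w => f w - g w.
(* product in A: concatenation of words, extended bilinearly *)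
Definition smul (f g : series) : series :=
  fun w => \sum_(i < (size w).+1) f (take i w) * g (drop i w).
Definition mono (u : word) : series := fun w => (w == u)%:R.

Inductive gen_ideal (X : series -> Prop) : series -> Prop :=
| gen_ideal0 : gen_ideal X szero
| gen_idealM (a x b : series) :
    is_poly a -> is_poly b -> X x -> gen_ideal X (smul (smul a x) b)
| gen_idealD (p q : series) :
    gen_ideal X p -> gen_ideal X q -> gen_ideal X (sadd p q).

Definition S_set : series -> Prop :=
  fun p => exists F G : word, [/\ F != [::], G != [::], balanced F, balanced G &
                                 p = ssub (mono (F ++ G)) (mono (G ++ F))].

Definition S'_set : series -> Prop :=
  fun p => exists P Q : word, [/\ prime_word P, prime_word Q &
                                 p = ssub (mono (P ++ Q)) (mono (Q ++ P))].

Definition J_ideal : series -> Prop := gen_ideal S_set.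

(* Main.v *)
Require Import Defs.
From mathcomp Require Import all_boot all_algebra.
From mathcomp Require Import Rstruct complex zify.
From Stdlib Require Import FunctionalExtensionality.
Import GRing.Theory.
Local Open Scope ring_scope.

Lemma smulA_pt f g h w : smul (smul f g) h w = smul f (smul g h) w.
Proof.
rewrite /smul.
set n := size w.
transitivity (\sum_(j < n.+1) \sum_(i < n.+1 | (i <= j)%N)
   f (take i w) * g (drop i (take j w)) * h (drop j w)).
  apply: eq_bigr => j _.
  have hj : (j <= n)%N by rewrite -ltnS ltn_ord.
  rewrite size_takel // big_distrl /=.
  rewrite (big_ord_widen n.+1 (fun i => f (take i (take j w)) * g (drop i (take j w)) * h (drop j w))) //.
  by apply: eq_bigr => i hi; rewrite take_takel.
rewrite (exchange_big_dep xpredT) //=.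
apply: eq_bigr => i _.
have hi : (i <= n)%N by rewrite -ltnS ltn_ord.
rewrite big_distrr /= size_drop -/n.
set F := fun j => f (take i w) * g (drop i (take j w)) * h (drop j w).
transitivity (\sum_(i <= j < n.+1) F j).
  by rewrite big_geq_mkord; apply: eq_bigl => j.
rewrite -{1}(add0n i) big_addn subSn // big_mkord.
apply: eq_bigr => k _; by rewrite /F take_drop drop_drop mulrA.
Qed.

Lemma smulA f g h : smul (smul f g) h = smul f (smul g h).
Proof. apply: functional_extensionality => w; exact: smulA_pt. Qed.

Lemma smulDl f g h : smul (sadd f g) h = sadd (smul f h) (smul g h).
Proof.
apply: functional_extensionality => w; rewrite /smul /sadd -big_split /=.
by apply: eq_bigr => i _; rewrite mulrDl.
Qed.

Lemma smulDr f g h : smul f (sadd g h) = sadd (smul f g) (smul f h).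
Proof.
apply: functional_extensionality => w; rewrite /smul /sadd -big_split /=.
by apply: eq_bigr => i _; rewrite mulrDr.
Qed.

Lemma smulBl f g h : smul (ssub f g) h = ssub (smul f h) (smul g h).
Proof.
apply: functional_extensionality => w; rewrite /smul /ssub -sumrB /=.
by apply: eq_bigr => i _; rewrite mulrBl.
Qed.

Lemma smulBr f g h : smul f (ssub g h) = ssub (smul f g) (smul f h).
Proof.
apply: functional_extensionality => w; rewrite /smul /ssub -sumrB /=.
by apply: eq_bigr => i _; rewrite mulrBr.
Qed.

Lemma smul0r f : smul f szero = szero.
Proof.
apply: functional_extensionality => w; rewrite /smul /szero.
by apply: big1 => i _; rewrite mulr0.
Qed.

Lemma smul0l f : smul szero f = szero.
Proof.
apply: functional_extensionality => w; rewrite /smul /szero.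
by apply: big1 => i _; rewrite mul0r.
Qed.

Lemma smul_monol u g w :
  smul (mono u) g w = (take (size u) w == u)%:R * g (drop (size u) w).
Proof.
rewrite /smul /mono.
case: (leqP (size u) (size w)) => hu.
  have hu' : (size u < (size w).+1)%N by [].
  rewrite (bigD1 (Ordinal hu')) //= big1 ?addr0 // => i /eqP hi.
  have -> : (take i w == u) = false.
    apply/negbTE/eqP => e; apply: hi; apply: val_inj => /=.
    rewrite -e size_takel //; by rewrite -ltnS ltn_ord.
  by rewrite mul0r.
have -> : (take (size u) w == u) = false.
  apply/negbTE/eqP => e; have := congr1 size e; rewrite size_take_min.
  by rewrite (minn_idPr (ltnW hu)) => h; move: hu; rewrite h ltnn.
rewrite mul0r big1 // => i _.
have -> : (take i w == u) = false.
  apply/negbTE/eqP => e; have := congr1 size e; rewrite size_take_min.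
  have hi : (i <= size w)%N by rewrite -ltnS ltn_ord.
  by rewrite (minn_idPl hi) => h; move: hu; rewrite -h ltnNge hi.
by rewrite mul0r.
Qed.

Lemma mono_mul u v : smul (mono u) (mono v) = mono (u ++ v).
Proof.
apply: functional_extensionality => w; rewrite smul_monol /mono.
case: (eqVneq w (u ++ v)) => [->|ne].
  by rewrite take_size_cat // drop_size_cat // !eqxx mulr1.
case: (eqVneq (take (size u) w) u) => [e1|]; last by rewrite mul0r.
case: (eqVneq (drop (size u) w) v) => [e2|]; last by rewrite mulr0.
by move: ne; rewrite -(cat_take_drop (size u) w) e1 e2 eqxx.
Qed.

Lemma poly_mono u : is_poly (mono u).
Proof.
exists [:: u] => w; rewrite /mono inE; case: (w == u) => //.
by rewrite eqxx.
Qed.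

Lemma poly_smul a b : is_poly a -> is_poly b -> is_poly (smul a b).
Proof.
move=> [sa ha] [sb hb]; exists [seq x ++ y | x <- sa, y <- sb] => w.
rewrite /smul => nz.
have [i ni] : exists i : 'I_(size w).+1, a (take i w) * b (drop i w) != 0.
  apply/existsP; apply: contraNT nz => /existsP H.
  apply/eqP; apply: big1 => i _; apply/eqP.
  case E: (a (take i w) * b (drop i w) == 0) => //.
  by exfalso; apply: H; exists i; rewrite E.
rewrite -(cat_take_drop i w); apply: allpairs_f.
  by apply: ha; apply: contraNneq ni => ->; rewrite mul0r.
by apply: hb; apply: contraNneq ni => ->; rewrite mulr0.
Qed.

Definition Ip := gen_ideal S'_set.

Definition Rr (x y : word) : Prop :=
  forall a b, is_poly a -> is_poly b -> Ip (smul (smul a (ssub (mono x) (mono y))) b).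

Lemma R_refl x : Rr x x.
Proof.
move=> a b _ _.
have -> : ssub (mono x) (mono x) = szero.
  by apply: functional_extensionality => w; rewrite /ssub subrr.
by rewrite smul0r smul0l; constructor.
Qed.

Lemma R_trans x y z : Rr x y -> Rr y z -> Rr x z.
Proof.
move=> h1 h2 a b ha hb.
have -> : ssub (mono x) (mono z) = sadd (ssub (mono x) (mono y)) (ssub (mono y) (mono z)).
  by apply: functional_extensionality => w; rewrite /ssub /sadd addrA subrK.
rewrite smulDr smulDl; constructor; [exact: h1 | exact: h2].
Qed.

Lemma R_ctx u x y v : Rr x y -> Rr (u ++ x ++ v) (u ++ y ++ v).
Proof.
move=> h a b ha hb.
have -> : ssub (mono (u ++ x ++ v)) (mono (u ++ y ++ v)) =
          smul (smul (mono u) (ssub (mono x) (mono y))) (mono v).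
  by rewrite smulBr smulBl !mono_mul !catA.
rewrite -!smulA smulA.
apply: h; apply: poly_smul => //; exact: poly_mono.
Qed.

Lemma R_ctxl x y v : Rr x y -> Rr (x ++ v) (y ++ v).
Proof. by move=> h; have := @R_ctx [::] x y v h. Qed.

Lemma R_ctxr u x y : Rr x y -> Rr (u ++ x) (u ++ y).
Proof. by move=> h; have := @R_ctx u x y [::] h; rewrite !cats0. Qed.

Lemma R_base P Q : prime_word P -> prime_word Q -> Rr (P ++ Q) (Q ++ P).
Proof.
move=> hP hQ a b ha hb; apply: gen_idealM => //.
by exists P, Q.
Qed.

Lemma balanced_cat u v : balanced u -> balanced v -> balanced (u ++ v).
Proof. by rewrite /balanced !count_cat => /eqP-> /eqP->. Qed.

Lemma balanced_catl u v : balanced u -> balanced (u ++ v) -> balanced v.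
Proof. by rewrite /balanced !count_cat => /eqP->; rewrite eqn_add2l. Qed.

Lemma prime_split w : balanced w -> w != [::] ->
  exists P w', [/\ prime_word P, balanced w' & w = P ++ w'].
Proof.
move=> bw nw.
have ex : exists n, (0 < n)%N && balanced (take n w).
  exists (size w); rewrite take_size bw andbT lt0n size_eq0; exact: nw.
case: (ex_minnP ex) => m /andP[m0 bm] mmin.
have msz : (m <= size w)%N.
  by apply: mmin; rewrite take_size bw andbT lt0n size_eq0.
exists (take m w), (drop m w); split; last by rewrite cat_take_drop.
- split; first by rewrite -size_eq0 size_takel // -lt0n.
  split => // -[u [v [nu nv bu bv e]]].
  have su : size (take m w) = (size u + size v)%N by rewrite e size_cat.
  rewrite size_takel // in su.
  have hv : (0 < size v)%N by rewrite lt0n size_eq0.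
  have hu : (0 < size u)%N by rewrite lt0n size_eq0.
  have tu : take (size u) w = u.
    have : take (size u) (take m w) = u by rewrite e take_size_cat.
    by rewrite take_takel //; lia.
  have := mmin (size u); rewrite tu bu hu /= => /(_ isT); lia.
- apply: (@balanced_catl (take m w) (drop m w) bm); by rewrite cat_take_drop.
Qed.

Lemma bal_ind (Pr : word -> Prop) : Pr [::] ->
  (forall P w, prime_word P -> balanced w -> Pr w -> Pr (P ++ w)) ->
  forall w, balanced w -> Pr w.
Proof.
move=> h0 hs w.
elim: {w}(size w) {-2}w (leqnn (size w)) => [|n IH] w hw bw.
  by move: hw; rewrite leqn0 size_eq0 => /eqP->.
case: (eqVneq w [::]) => [->//|nw].
have [P [w' [hP bw' e]]] := @prime_split w bw nw.
rewrite e; apply: hs => //; apply: IH => //.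
have hp : (0 < @size letter P)%N by rewrite lt0n size_eq0; case: hP.
move: hw; rewrite e size_cat; lia.
Qed.

Lemma claim1 P G : prime_word P -> balanced G -> Rr (P ++ G) (G ++ P).
Proof.
move=> hP bG; apply: (@bal_ind (fun G => Rr (P ++ G) (G ++ P)) _ _ G bG) => [|Q G' hQ bG' IH] /=.
  by rewrite cats0; exact: R_refl.
rewrite -catA; apply: (@R_trans _ (Q ++ (P ++ G'))).
  by rewrite !catA; apply: R_ctxl; apply: R_base.
by apply: R_ctxr.
Qed.

Lemma claim2 F G : balanced F -> balanced G -> Rr (F ++ G) (G ++ F).
Proof.
move=> bF bG; apply: (@bal_ind (fun F => Rr (F ++ G) (G ++ F)) _ _ F bF) => [|P F' hP bF' IH] /=.
  by rewrite cats0; exact: R_refl.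
rewrite -catA; apply: (@R_trans _ (P ++ (G ++ F'))).
  by apply: R_ctxr.
by rewrite !catA; apply: R_ctxl; apply: claim1.
Qed.

Theorem lemma4p3 : forall p : series, gen_ideal S'_set p <-> J_ideal p.
Proof.
move=> p; split.
  elim => [|a x b ha hb [P [Q [hP hQ ->]]]|q r _ hq _ hr].
  - exact: gen_ideal0.
  - apply: gen_idealM => //.
    case: hP => nP [bP _]; case: hQ => nQ [bQ _].
    by exists P, Q.
  - exact: gen_idealD.
rewrite /J_ideal; elim => [|a x b ha hb [F [G [nF nG bF bG ->]]]|q r _ hq _ hr].
- exact: gen_ideal0.
- exact: claim2.
- exact: gen_idealD.
Qed.
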